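(* For any $w>0$ and $\rho\ge 2w$, there exists a partition of a disk of radius $\rho$ in $\mathbb{R}^2$ into convex cells such that each cell has diameter at most $8w$ and area at least $w^2/8$. *)

(* Defs.v *)
From HB Require Import structures.
From mathcomp Require Import all_boot all_order all_algebra.
From mathcomp Require Import all_classical all_reals all_analysis.
Set Implicit Arguments. Unset Strict Implicit. Unset Printing Implicit Defensive.
Import Order.TTheory GRing.Theory Num.Theory.
Local Open Scope classical_set_scope.
Local Open Scope ring_scope.

Definition dist2 {R : realType} (x y : R * R) : R :=
  Num.sqrt ((x.1 - y.1) ^+ 2 + (x.2 - y.2) ^+ 2).

Definition disk {R : realType} (rho : R) : set (R * R) :=
  [set x | dist2 x (0, 0) <= rho].

Definition convex2 {R : realType} (C : set (R * R)) : Prop :=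
  forall x y t, C x -> C y -> 0 <= t <= 1 ->
    C (t * x.1 + (1 - t) * y.1, t * x.2 + (1 - t) * y.2).

Definition diam_le {R : realType} (C : set (R * R)) (d : R) : Prop :=
  forall x y, C x -> C y -> dist2 x y <= d.

Definition interior2 {R : realType} (C : set (R * R)) : set (R * R) :=
  [set x | exists2 e : R, 0 < e & forall y, dist2 x y < e -> C y].

Definition area {R : realType} : set (R * R) -> \bar R :=
  ((@lebesgue_measure R) \x (@lebesgue_measure R))%E.

(* Main.v *)
Require Import Defs.
From HB Require Import structures.
From mathcomp Require Import all_boot all_order all_algebra.
From mathcomp Require Import all_classical all_reals all_analysis.
From mathcomp Require Import ring lra.
Import Order.TTheory GRing.Theory Num.Theory.
Local Open Scope classical_set_scope.
Local Open Scope ring_scope.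


Definition box {R : realType} (x0 x1 y0 y1 : R) : set (R * R) :=
  [set p | (x0 <= p.1 <= x1) /\ (y0 <= p.2 <= y1)].

Lemma diskE {R : realType} (rho : R) (p : R*R) : 0 <= rho ->
  disk rho p <-> p.1^+2 + p.2^+2 <= rho^+2.
Proof.
move=> hr; rewrite /disk /= /dist2 !subr0.
by rewrite -{1}(ger0_norm hr) -sqrtr_sqr ler_sqrt ?exprn_ge0.
Qed.

Lemma convex_sq {R : realType} (t a b : R) : 0 <= t <= 1 ->
  (t * a + (1 - t) * b)^+2 <= t * a^+2 + (1 - t) * b^+2.
Proof.
move=> /andP[t0 t1].
have -> : t * a^+2 + (1 - t) * b^+2 = (t * a + (1 - t) * b)^+2 + t * (1 - t) * (a - b)^+2 by ring.
rewrite lerDl; apply: mulr_ge0; [apply: mulr_ge0 => //; lra | exact: sqr_ge0].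
Qed.

Lemma convex2_disk {R : realType} (rho : R) : 0 <= rho -> convex2 (disk rho).
Proof.
move=> hr x y t /(diskE _ _ hr) hx /(diskE _ _ hr) hy ht.
apply/(diskE _ _ hr) => /=.
have h1 := convex_sq t x.1 y.1 ht; have h2 := convex_sq t x.2 y.2 ht.
case/andP: ht => t0 t1.
have h3 : t * (x.1^+2 + x.2^+2) <= t * rho^+2 by rewrite ler_wpM2l.
have h4 : (1 - t) * (y.1^+2 + y.2^+2) <= (1 - t) * rho^+2 by rewrite ler_wpM2l ?subr_ge0.
lra.
Qed.

Lemma convex_lin {R : realType} (t a b lo hi : R) : 0 <= t <= 1 ->
  lo <= a <= hi -> lo <= b <= hi -> lo <= t * a + (1 - t) * b <= hi.
Proof.
move=> /andP[t0 t1] /andP[a0 a1] /andP[b0 b1].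
have h1 : t * lo <= t * a by rewrite ler_wpM2l.
have h2 : t * a <= t * hi by rewrite ler_wpM2l.
have h3 : (1 - t) * lo <= (1 - t) * b by rewrite ler_wpM2l ?subr_ge0.
have h4 : (1 - t) * b <= (1 - t) * hi by rewrite ler_wpM2l ?subr_ge0.
apply/andP; split; lra.
Qed.

Lemma convex2_box {R : realType} (x0 x1 y0 y1 : R) : convex2 (box x0 x1 y0 y1).
Proof.
move=> x y t [hx1 hx2] [hy1 hy2] ht; split => /=; exact: convex_lin.
Qed.

Lemma convex2I {R : realType} (A B : set (R * R)) : convex2 A -> convex2 B -> convex2 (A `&` B).
Proof. by move=> cA cB x y t [? ?] [? ?] ht; split; [apply: cA | apply: cB]. Qed.

Lemma boxE {R : realType} (x0 x1 y0 y1 : R) :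
  box x0 x1 y0 y1 = `[x0, x1]%classic `*` `[y0, y1]%classic.
Proof.
by apply/seteqP; split => p /=; rewrite /box /= !in_itv /=.
Qed.

Lemma measurable_box {R : realType} (x0 x1 y0 y1 : R) : measurable (box x0 x1 y0 y1).
Proof. by rewrite boxE; apply: measurableX; apply: measurable_itv. Qed.

Lemma measurable_disk {R : realType} (rho : R) : 0 <= rho -> measurable (disk rho).
Proof.
move=> hr.
have mf : measurable_fun setT (fun p : R * R => p.1 * p.1 + p.2 * p.2).
  apply: measurable_realfun.measurable_funD; apply: measurable_realfun.measurable_funM; first (exact: measurable_fst);
    first (exact: measurable_fst); exact: measurable_snd.
have := mf measurableT _ (measurable_itv `]-oo, rho^+2]).
rewrite setTI; congr measurable; apply/seteqP; split => p /=; rewrite /preimage /=.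
  by rewrite in_itv /= -!expr2 => /(diskE _ _ hr).
by move/(diskE _ _ hr); rewrite in_itv /= -!expr2.
Qed.

Lemma dist2_shift1 {R : realType} (p : R * R) d : dist2 p (p.1 + d, p.2) = `|d|.
Proof.
rewrite /dist2 /=.
have -> : (p.1 - (p.1 + d))^+2 + (p.2 - p.2)^+2 = d^+2 by ring.
exact: sqrtr_sqr.
Qed.

Lemma dist2_shift2 {R : realType} (p : R * R) d : dist2 p (p.1, p.2 + d) = `|d|.
Proof.
rewrite /dist2 /=.
have -> : (p.1 - p.1)^+2 + (p.2 - (p.2 + d))^+2 = d^+2 by ring.
exact: sqrtr_sqr.
Qed.

Lemma interior_box {R : realType} (C : set (R * R)) x0 x1 y0 y1 p :
  C `<=` box x0 x1 y0 y1 -> interior2 C p -> (x0 < p.1 < x1) /\ (y0 < p.2 < y1).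
Proof.
move=> sub [e e0 he].
have e20 : 0 < e / 2 by rewrite divr_gt0.
have lte : `|e / 2| < e by rewrite gtr0_norm // ltr_pdivrMr // ltr_pMr //; lra.
have lte' : `|- (e / 2)| < e by rewrite normrN.
have := sub _ (he _ (eq_ind_r (fun z => z < e) lte' (dist2_shift1 p (- (e/2))))).
have := sub _ (he _ (eq_ind_r (fun z => z < e) lte (dist2_shift1 p (e/2)))).
have := sub _ (he _ (eq_ind_r (fun z => z < e) lte' (dist2_shift2 p (- (e/2))))).
have := sub _ (he _ (eq_ind_r (fun z => z < e) lte (dist2_shift2 p (e/2)))).
move=> [_ /andP[_ b2]] [_ /andP[b1 _]] [/andP[_ a2] _] [/andP[a1 _] _] /=.
simpl in *.
split; apply/andP; split; lra.
Qed.

Lemma diam_box {R : realType} (C : set (R * R)) x0 x1 y0 y1 d :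
  C `<=` box x0 x1 y0 y1 -> 0 <= d ->
  (x1 - x0)^+2 + (y1 - y0)^+2 <= d^+2 -> diam_le C d.
Proof.
move=> sub d0 hd p q /sub [/andP[p1 p2] /andP[p3 p4]] /sub [/andP[q1 q2] /andP[q3 q4]].
rewrite /dist2 -(ger0_norm d0) -sqrtr_sqr ler_sqrt ?sqr_ge0 //.
have h1 : (p.1 - q.1)^+2 <= (x1 - x0)^+2 by nra.
have h2 : (p.2 - q.2)^+2 <= (y1 - y0)^+2 by nra.
lra.
Qed.

Lemma area_box {R : realType} (C : set (R * R)) x0 x1 y0 y1 :
  measurable C -> box x0 x1 y0 y1 `<=` C -> x0 < x1 -> y0 < y1 ->
  (((x1 - x0) * (y1 - y0))%:E <= area C)%E.
Proof.
move=> mC sub h1 h2.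
have -> : (((x1 - x0) * (y1 - y0))%:E = area (box x0 x1 y0 y1)).
  rewrite boxE /area product_measure1E; try exact: measurable_itv.
  transitivity (lebesgue_measure `[x0,x1]%classic * lebesgue_measure `[y0,y1]%classic)%E; last by [].
  by rewrite !lebesgue_measure_itv /= !lte_fin h1 h2 -EFinM.
rewrite /area; apply: le_measure => //; rewrite inE //; exact: measurable_box.
Qed.


Lemma sq_le {R : realType} (x y : R) : 0 <= y -> x ^+ 2 <= y ^+ 2 -> x <= y.
Proof.
move=> y0 h; apply: (le_trans (ler_norm x)).
by rewrite -sqrtr_sqr -(ger0_norm y0) -sqrtr_sqr ler_wsqrtr.
Qed.

Lemma sqrt_ge {R : realType} (y z : R) : 0 <= y -> y ^+ 2 <= z -> y <= Num.sqrt z.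
Proof. by move=> y0 h; rewrite -(ger0_norm y0) -sqrtr_sqr ler_wsqrtr. Qed.

Lemma sqrt_le {R : realType} (y z : R) : 0 <= y -> z <= y ^+ 2 -> Num.sqrt z <= y.
Proof. by move=> y0 h; rewrite -(ger0_norm y0) -sqrtr_sqr ler_wsqrtr. Qed.

Definition aa {R : realType} (rho : R) := Num.sqrt (rho ^+ 2 / 2).
Definition KK {R : realType} (s rho : R) : nat := Num.trunc (2 * aa rho / s).
Definition hh {R : realType} (s rho : R) := 2 * aa rho / (KK s rho)%:R.
Definition lo {R : realType} (s rho : R) (k : nat) := - aa rho + k%:R * hh s rho.
Definition yo {R : realType} (s rho : R) k :=
  Num.max `|lo s rho k| `|lo s rho k + hh s rho|.
Definition GG {R : realType} (s rho : R) k := Num.sqrt (rho ^+ 2 - yo s rho k ^+ 2).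
Definition MM {R : realType} (s rho : R) k : nat := Num.trunc (2 * GG s rho k / s).
Definition wd {R : realType} (s rho : R) k := 2 * GG s rho k / (MM s rho k)%:R.
Definition XX {R : realType} (s rho : R) k (j : nat) := - GG s rho k + j%:R * wd s rho k.
Definition cc {R : realType} (s rho : R) j := lo s rho j + hh s rho / 2.
Definition mm {R : realType} (s rho : R) j := `|cc s rho j| + hh s rho / 4.
Definition FF {R : realType} (s rho : R) j := Num.sqrt (rho ^+ 2 - mm s rho j ^+ 2).
Definition DD {R : realType} (s rho : R) j := FF s rho j - aa rho.
Definition NN {R : realType} (s rho : R) j : nat := (Num.trunc (DD s rho j / s)).+1.
Definition vv {R : realType} (s rho : R) j := DD s rho j / (NN s rho j)%:R.

Lemma aa_ge0 {R : realType} (rho : R) : 0 <= aa rho.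
Proof. exact: sqrtr_ge0. Qed.

Lemma aa_sq {R : realType} (rho : R) : aa rho ^+ 2 = rho ^+ 2 / 2.
Proof. by rewrite sqr_sqrtr // divr_ge0 // sqr_ge0. Qed.

Lemma aa_le {R : realType} (rho : R) : 0 <= rho -> aa rho <= rho.
Proof. move=> r0; apply: sq_le => //; rewrite aa_sq; have := sqr_ge0 rho; lra. Qed.

Lemma truncP {R : realType} [x : R] : 0 <= x -> (Num.trunc x)%:R <= x < (Num.trunc x).+1%:R.
Proof. exact: truncn_itv. Qed.

Lemma K_ge2 {R : realType} [s rho : R] : 0 < s -> s <= aa rho -> (2 <= KK s rho)%N.
Proof.
move=> s0 sa.
have t0 : 0 <= 2 * aa rho / s by rewrite divr_ge0 ?mulr_ge0 ?aa_ge0 // ltW.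
have /andP[_ h2] := truncP t0.
have h3 : 2 <= 2 * aa rho / s by rewrite ler_pdivlMr //; lra.
have : (2%:R : R) < (KK s rho).+1%:R by apply: le_lt_trans h2.
by rewrite ltr_nat.
Qed.

Lemma K_bounds {R : realType} [s rho : R] : 0 < s -> s <= aa rho ->
  (KK s rho)%:R * s <= 2 * aa rho /\ 2 * aa rho < (KK s rho).+1%:R * s.
Proof.
move=> s0 sa.
have t0 : 0 <= 2 * aa rho / s by rewrite divr_ge0 ?mulr_ge0 ?aa_ge0 // ltW.
have /andP[h1 h2] := truncP t0.
by split; [rewrite -ler_pdivlMr | rewrite -ltr_pdivrMr].
Qed.

Lemma h_facts {R : realType} [s rho : R] : 0 < s -> s <= aa rho ->
  [/\ (KK s rho)%:R * hh s rho = 2 * aa rho, s <= hh s rho, hh s rho < 2 * s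
    & hh s rho <= aa rho].
Proof.
move=> s0 sa.
have K2 := K_ge2 s0 sa.
have [k1 k2] := K_bounds s0 sa.
have Kpos : 0 < (KK s rho)%:R :> R by rewrite ltr0n; apply: leq_trans K2.
have K2R : 2 <= (KK s rho)%:R :> R by rewrite (ler_nat R 2).
rewrite /hh; split.
- by rewrite mulrC divfK // lt0r_neq0.
- by rewrite ler_pdivlMr // mulrC.
- rewrite ltr_pdivrMr //.
  have : (KK s rho).+1%:R = (KK s rho)%:R + 1 :> R by rewrite -natr1.
  move=> e; rewrite e in k2.
  have : s <= (KK s rho)%:R * s by rewrite ler_pMl //; lra.
  lra.
- rewrite ler_pdivrMr //.
  have := aa_ge0 rho => a0.
  have : aa rho * 2 <= aa rho * (KK s rho)%:R by rewrite ler_wpM2l.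
  lra.
Qed.


Lemma lo_bounds {R : realType} [s rho : R] [k : nat] : 0 < s -> s <= aa rho -> (k < KK s rho)%N ->
  - aa rho <= lo s rho k /\ lo s rho k + hh s rho <= aa rho.
Proof.
move=> s0 sa kK.
have [hK hs h2 ha] := h_facts s0 sa.
have h0 : 0 <= hh s rho by lra.
have k0 : 0 <= k%:R * hh s rho by rewrite mulr_ge0.
have k1 : k.+1%:R * hh s rho <= (KK s rho)%:R * hh s rho by rewrite ler_wpM2r // ler_nat.
rewrite /lo; split; first lra.
move: k1; rewrite -natr1 mulrDl mul1r; lra.
Qed.

Lemma norm_le {R : realType} (x b : R) : -b <= x -> x <= b -> `|x| <= b.
Proof. by move=> h1 h2; rewrite ler_norml h1 h2. Qed.

Lemma yo_facts {R : realType} [s rho : R] [k : nat] : 0 < s -> s <= aa rho -> (k < KK s rho)%N ->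
  [/\ 0 <= yo s rho k, yo s rho k <= aa rho,
      forall y, lo s rho k <= y <= lo s rho k + hh s rho -> `|y| <= yo s rho k
    & forall y, lo s rho k <= y <= lo s rho k + hh s rho -> yo s rho k <= `|y| + hh s rho].
Proof.
move=> s0 sa kK.
have [hK hs h2 ha] := h_facts s0 sa.
have [l1 l2] := lo_bounds s0 sa kK.
set l := lo s rho k in l1 l2 *; set h := hh s rho in hK hs h2 ha l2 *.
rewrite /yo -/l -/h.
split.
- by rewrite le_max normr_ge0.
- by rewrite ge_max !norm_le //; lra.
- move=> y /andP[y1 y2]; rewrite le_max.
  case: (lerP 0 y) => y0.
    by rewrite ger0_norm // (ger0_norm (_ : 0 <= l + h)) ?y2 ?orbT //; lra.
  by rewrite ltr0_norm // (ler0_norm (_ : l <= 0)) ?lerN2 ?y1 //; lra.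
- move=> y /andP[y1 y2]; rewrite ge_max.
  have n1 : `|l| <= `|y| + `|l - y| by have := ler_normD y (l - y); rewrite [y + _]addrC subrK.
  have n2 : `|l + h| <= `|y| + `|l + h - y| by have := ler_normD y (l + h - y); rewrite [y + _]addrC subrK.
  have n3 : `|l - y| <= h by apply: norm_le; lra.
  have n4 : `|l + h - y| <= h by apply: norm_le; lra.
  apply/andP; split; lra.
Qed.

Lemma G_facts {R : realType} [s rho : R] [k : nat] : 0 < s -> s <= aa rho -> 0 <= rho ->
  (k < KK s rho)%N ->
  [/\ GG s rho k ^+ 2 = rho ^+ 2 - yo s rho k ^+ 2, aa rho <= GG s rho k
    & GG s rho k <= rho].
Proof.
move=> s0 sa r0 kK.
have [y0 ya _ _] := yo_facts s0 sa kK.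
have a2 := aa_sq rho.
have y2 : yo s rho k ^+ 2 <= aa rho ^+ 2 by rewrite ler_pXn2r // ?nnegrE ?aa_ge0.
have r2 := sqr_ge0 rho.
rewrite /GG; split.
- by rewrite sqr_sqrtr //; lra.
- by apply: sqrt_ge; [exact: aa_ge0 | lra].
- apply: sqrt_le => //; have := sqr_ge0 (yo s rho k); lra.
Qed.

Lemma M_facts {R : realType} [s rho : R] [k : nat] : 0 < s -> s <= aa rho -> 0 <= rho ->
  (k < KK s rho)%N ->
  [/\ (1 <= MM s rho k)%N, (MM s rho k)%:R * wd s rho k = 2 * GG s rho k,
      s <= wd s rho k & wd s rho k < 2 * s].
Proof.
move=> s0 sa r0 kK.
have [_ aG _] := G_facts s0 sa r0 kK.
have G0 : 0 <= GG s rho k by have := aa_ge0 rho; lra.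
have t0 : 0 <= 2 * GG s rho k / s by rewrite divr_ge0 ?mulr_ge0 // ltW.
have /andP[h1 h2] := truncP t0.
have h3 : 2 <= 2 * GG s rho k / s by rewrite ler_pdivlMr //; lra.
have M2 : (2 <= MM s rho k)%N.
  have : (2%:R : R) < (MM s rho k).+1%:R by apply: le_lt_trans h2.
  by rewrite ltr_nat.
have Mpos : 0 < (MM s rho k)%:R :> R by rewrite ltr0n; apply: leq_trans M2.
have M2R : 2 <= (MM s rho k)%:R :> R by rewrite (ler_nat R 2).
rewrite /wd; split.
- exact: leq_trans M2.
- by rewrite mulrC divfK // lt0r_neq0.
- by rewrite ler_pdivlMr // mulrC -ler_pdivlMr.
- rewrite ltr_pdivrMr //.
  have h2' : 2 * GG s rho k < (MM s rho k).+1%:R * s by rewrite -ltr_pdivrMr.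
  rewrite -natr1 mulrDl mul1r in h2'.
  have hh1 : s <= (MM s rho k)%:R * s by rewrite ler_pMl //; lra.
  have -> : 2 * s * (MM s rho k)%:R = 2 * ((MM s rho k)%:R * s) by ring.
  lra.
Qed.

Lemma X_facts {R : realType} [s rho : R] [k : nat] : 0 < s -> s <= aa rho -> 0 <= rho ->
  (k < KK s rho)%N ->
  [/\ XX s rho k 0 = - GG s rho k, XX s rho k (MM s rho k) = GG s rho k
    & forall j, XX s rho k j.+1 = XX s rho k j + wd s rho k].
Proof.
move=> s0 sa r0 kK.
have [_ hM _ _] := M_facts s0 sa r0 kK.
rewrite /XX; split.
- by rewrite mul0r addr0.
- rewrite hM; lra.
- by move=> j; rewrite -natr1 mulrDl mul1r addrA.
Qed.

Lemma X_mono {R : realType} [s rho : R] [k : nat] : 0 < s -> s <= aa rho -> 0 <= rho ->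
  (k < KK s rho)%N -> forall i j, (i <= j)%N -> XX s rho k i <= XX s rho k j.
Proof.
move=> s0 sa r0 kK i j ij.
have [_ _ w1 _] := M_facts s0 sa r0 kK.
rewrite /XX lerD2l ler_wpM2r ?ler_nat //; lra.
Qed.

Lemma xbound {R : realType} [s rho : R] [k : nat] (p : R * R) :
  0 < s -> s <= aa rho -> 0 <= rho -> (k < KK s rho)%N ->
  disk rho p -> lo s rho k <= p.2 <= lo s rho k + hh s rho ->
  `|p.1| <= GG s rho k + hh s rho.
Proof.
move=> s0 sa r0 kK /(diskE _ _ r0) hp hy.
have [y0 ya yabs yle] := yo_facts s0 sa kK.
have [G2 aG Gr] := G_facts s0 sa r0 kK.
have [hK hs h2 ha] := h_facts s0 sa.
have a0 := aa_ge0 rho.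
have u1 := yabs _ hy; have u2 := yle _ hy.
set y := p.2 in hp hy u1 u2; set Y := yo s rho k in y0 ya u1 u2 G2.
set G := GG s rho k in G2 aG Gr *; set h := hh s rho in hK hs h2 ha u2 *.
apply: sq_le; first lra.
rewrite -normrX ger0_norm ?sqr_ge0 //.
have ny := normr_ge0 y.
have e1 : Y ^+ 2 <= (`|y| + h) ^+ 2 by rewrite ler_pXn2r // nnegrE; lra.
have e2 : `|y| ^+ 2 = y ^+ 2 by rewrite -normrX ger0_norm // sqr_ge0.
have e3 : `|y| * h <= G * h by rewrite ler_wpM2r //; lra.
nra.
Qed.


Lemma cap_facts {R : realType} [s rho : R] [j : nat] : 0 < s -> s <= aa rho -> 0 <= rho ->
  (j < KK s rho)%N ->
  [/\ 0 <= mm s rho j,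
      mm s rho j <= aa rho - hh s rho / 4,
      FF s rho j ^+ 2 = rho ^+ 2 - mm s rho j ^+ 2,
      aa rho + 3 * hh s rho / 16 <= FF s rho j & FF s rho j <= rho].
Proof.
move=> s0 sa r0 jK.
have [hK hs h2 ha] := h_facts s0 sa.
have [l1 l2] := lo_bounds s0 sa jK.
have a0 := aa_ge0 rho.
have a2 := aa_sq rho.
have c1 : `|cc s rho j| <= aa rho - hh s rho / 2 by apply: norm_le; rewrite /cc; lra.
have m0 : 0 <= mm s rho j by rewrite /mm; have := normr_ge0 (cc s rho j); lra.
have m1 : mm s rho j <= aa rho - hh s rho / 4 by rewrite /mm; lra.
have m2 : mm s rho j ^+ 2 <= (aa rho - hh s rho / 4) ^+ 2 by rewrite ler_pXn2r // ?nnegrE; lra.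
have r2 := sqr_ge0 rho.
have am : mm s rho j ^+ 2 <= rho ^+ 2.
  have : (aa rho - hh s rho / 4) ^+ 2 <= aa rho ^+ 2 by rewrite ler_pXn2r // ?nnegrE; lra.
  lra.
split => //.
- by rewrite /FF sqr_sqrtr //; lra.
- apply: sqrt_ge; first lra.
  set a := aa rho in a0 a2 ha l1 l2 c1 m1 m2 *; set h := hh s rho in hK hs h2 ha l1 l2 c1 m1 m2 *.
  have hpos : 0 <= h by lra.
  have q1 : h * (a - h) >= 0 by apply: mulr_ge0; lra.
  have q2 := sqr_ge0 h.
  have ex : (a + 3 * h / 16) ^+ 2 + (a - h / 4) ^+ 2 = 2 * a ^+ 2 - h * (a - h) / 8 - 7 * h ^+ 2 / 256 by field.
  lra.
- by apply: sqrt_le => //; have := sqr_ge0 (mm s rho j); lra.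
Qed.

Lemma N_facts {R : realType} [s rho : R] [j : nat] : 0 < s -> s <= aa rho -> 0 <= rho ->
  (j < KK s rho)%N ->
  [/\ (1 <= NN s rho j)%N, (NN s rho j)%:R * vv s rho j = DD s rho j,
      3 * s / 16 <= vv s rho j & vv s rho j <= s].
Proof.
move=> s0 sa r0 jK.
have [hK hs h2 ha] := h_facts s0 sa.
have [_ _ _ F1 _] := cap_facts s0 sa r0 jK.
have D1 : 3 * hh s rho / 16 <= DD s rho j by rewrite /DD; lra.
have D0 : 0 <= DD s rho j / s by rewrite divr_ge0 //; lra.
have /andP[t1 t2] := truncP D0.
have Npos : 0 < (NN s rho j)%:R :> R by rewrite ltr0n.
have NE : (NN s rho j)%:R = (Num.trunc (DD s rho j / s))%:R + 1 :> R by rewrite -natr1.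
have t2' : DD s rho j < (NN s rho j)%:R * s by rewrite -ltr_pdivrMr.
rewrite /vv; split => //.
- by rewrite mulrC divfK // lt0r_neq0.
- rewrite ler_pdivlMr //.
  case: (ltrP (DD s rho j) s) => Ds.
    have T0 : Num.trunc (DD s rho j / s) = 0%N.
      have : (Num.trunc (DD s rho j / s))%:R < 1 :> R.
        by apply: le_lt_trans t1 _; rewrite ltr_pdivrMr // mul1r.
      by rewrite ltrn1 ltnS leqn0 => /eqP.
    rewrite NE T0 add0r mulr1; lra.
  have t1' : (Num.trunc (DD s rho j / s))%:R * s <= DD s rho j by rewrite -ler_pdivlMr.
  have : (NN s rho j)%:R * s <= 2 * DD s rho j by rewrite NE mulrDl mul1r; lra.
  have ge : 0 <= (NN s rho j)%:R * s by apply: mulr_ge0; lra.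
  have -> : 3 * s / 16 * (NN s rho j)%:R = 3 / 16 * ((NN s rho j)%:R * s) by ring.
  lra.
- by rewrite ler_pdivrMr //; lra.
Qed.

Lemma ybound {R : realType} [s rho : R] [j : nat] (p : R * R) :
  0 < s -> s <= aa rho -> 0 <= rho -> (j < KK s rho)%N ->
  disk rho p -> lo s rho j <= p.1 <= lo s rho j + hh s rho ->
  `|p.2| <= FF s rho j + hh s rho.
Proof.
move=> s0 sa r0 jK /(diskE _ _ r0) hp /andP[hx1 hx2].
have [hK hs h2 ha] := h_facts s0 sa.
have [l1 l2] := lo_bounds s0 sa jK.
have [m0 m1 F2 F1 Fr] := cap_facts s0 sa r0 jK.
have a0 := aa_ge0 rho.
have xa : `|p.1| <= aa rho by apply: norm_le; lra.
have xc : `|p.1 - cc s rho j| <= hh s rho / 2 by apply: norm_le; rewrite /cc; lra.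
have tri : `|cc s rho j| <= `|p.1| + `|p.1 - cc s rho j|.
  have := ler_normD p.1 (cc s rho j - p.1).
  by rewrite (_ : p.1 + (cc s rho j - p.1) = cc s rho j); [rewrite distrC | ring].
have mx : mm s rho j <= `|p.1| + 3 * hh s rho / 4 by rewrite /mm; lra.
have nx := normr_ge0 p.1.
have mx2 : mm s rho j ^+ 2 <= (`|p.1| + 3 * hh s rho / 4) ^+ 2 by rewrite ler_pXn2r // ?nnegrE; lra.
have e2 : `|p.1| ^+ 2 = p.1 ^+ 2 by rewrite -normrX ger0_norm // sqr_ge0.
apply: sq_le; first lra.
rewrite -normrX ger0_norm ?sqr_ge0 //.
have e3 : `|p.1| * hh s rho <= FF s rho j * hh s rho by rewrite ler_wpM2r //; lra.
have ex1 : (`|p.1| + 3 * hh s rho / 4) ^+ 2 = `|p.1| ^+ 2 + 3 / 2 * (`|p.1| * hh s rho) + 9 / 16 * hh s rho ^+ 2 by field.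
have ex2 : (FF s rho j + hh s rho) ^+ 2 = FF s rho j ^+ 2 + 2 * (FF s rho j * hh s rho) + hh s rho ^+ 2 by ring.
have e4 : 0 <= `|p.1| * hh s rho by apply: mulr_ge0; lra.
have e5 := sqr_ge0 (hh s rho).
lra.
Qed.


Definition dM {R : realType} (s rho : R) (k j : nat) : (R * R) * (R * R) :=
  ((if j == 0%N then - rho else XX s rho k j,
    if j.+1 == MM s rho k then rho else XX s rho k j.+1),
   (lo s rho k, lo s rho k + hh s rho)).
Definition dT {R : realType} (s rho : R) (j i : nat) : (R * R) * (R * R) :=
  ((lo s rho j, lo s rho j + hh s rho),
   (aa rho + i%:R * vv s rho j,
    if i.+1 == NN s rho j then rho else aa rho + i.+1%:R * vv s rho j)).
Definition dB {R : realType} (s rho : R) (j i : nat) : (R * R) * (R * R) :=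
  ((lo s rho j, lo s rho j + hh s rho),
   (if i.+1 == NN s rho j then - rho else - aa rho - i.+1%:R * vv s rho j,
    - aa rho - i%:R * vv s rho j)).
Definition bset {R : realType} (d : (R * R) * (R * R)) := box d.1.1 d.1.2 d.2.1 d.2.2.
Definition dataOf {R : realType} (s rho : R) (c k j : nat) :=
  if c == 0%N then dM s rho k j else if c == 1%N then dT s rho k j else dB s rho k j.
Definition validb {R : realType} (s rho : R) (c k j : nat) : bool :=
  if c == 0%N then (j < MM s rho k)%N else (j < NN s rho k)%N.

Lemma sq_bound {R : realType} (x y s : R) : 0 <= x -> x <= 6 * s -> 0 <= y -> y <= 2 * s ->
  x ^+ 2 + y ^+ 2 <= 40 * s ^+ 2.
Proof.
move=> x0 x1 y0 y1.
have h1 : x ^+ 2 <= (6 * s) ^+ 2 by rewrite ler_pXn2r // nnegrE; lra.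
have h2 : y ^+ 2 <= (2 * s) ^+ 2 by rewrite ler_pXn2r // nnegrE; lra.
have e : (6 * s) ^+ 2 + (2 * s) ^+ 2 = 40 * s ^+ 2 by ring.
lra.
Qed.

Lemma diam_M {R : realType} [s rho : R] [k j : nat] (d : R) :
  0 < s -> s <= aa rho -> 0 <= rho -> (k < KK s rho)%N -> (j < MM s rho k)%N ->
  0 <= d -> 40 * s ^+ 2 <= d ^+ 2 ->
  diam_le (disk rho `&` bset (dM s rho k j)) d.
Proof.
move=> s0 sa r0 kK jM d0 hd.
have [hK hs h2 ha] := h_facts s0 sa.
have [M1 MW w1 w2] := M_facts s0 sa r0 kK.
have [X0 XM XS] := X_facts s0 sa r0 kK.
apply: (@diam_box _ _ (XX s rho k j - hh s rho) (XX s rho k j + wd s rho k + hh s rho)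
  (lo s rho k) (lo s rho k + hh s rho)) => //.
  move=> p [pd [/andP[px1 px2] /andP[py1 py2]]]; rewrite /= in px1 px2 py1 py2.
  split; last by rewrite py1 py2.
  have xb := xbound p s0 sa r0 kK pd (introT andP (conj py1 py2)).
  move: xb; rewrite ler_norml => /andP[xb1 xb2].
  apply/andP; split.
    move: px1; case: eqP => [-> _|_ h]; first by rewrite X0; lra.
    lra.
  move: px2; case: eqP => [e _|_ h]; last by rewrite -XS; lra.
  have : XX s rho k j.+1 = GG s rho k by rewrite e.
  rewrite XS; lra.
apply: le_trans hd; apply: sq_bound; lra.
Qed.

Lemma sq_bound2 {R : realType} (x y s : R) : 0 <= x -> x <= 2 * s -> 0 <= y -> y <= 3 * s ->
  x ^+ 2 + y ^+ 2 <= 40 * s ^+ 2.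
Proof.
move=> x0 x1 y0 y1.
have h1 : x ^+ 2 <= (2 * s) ^+ 2 by rewrite ler_pXn2r // nnegrE; lra.
have h2 : y ^+ 2 <= (3 * s) ^+ 2 by rewrite ler_pXn2r // nnegrE; lra.
have e : (2 * s) ^+ 2 + (3 * s) ^+ 2 = 13 * s ^+ 2 by ring.
have := sqr_ge0 s; lra.
Qed.

Lemma FNv {R : realType} [s rho : R] [j : nat] : 0 < s -> s <= aa rho -> 0 <= rho ->
  (j < KK s rho)%N -> FF s rho j = aa rho + (NN s rho j)%:R * vv s rho j.
Proof.
move=> s0 sa r0 jK; have [_ -> _ _] := N_facts s0 sa r0 jK; rewrite /DD; ring.
Qed.

Lemma diam_T {R : realType} [s rho : R] [k j : nat] (d : R) :
  0 < s -> s <= aa rho -> 0 <= rho -> (k < KK s rho)%N -> (j < NN s rho k)%N ->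
  0 <= d -> 40 * s ^+ 2 <= d ^+ 2 ->
  diam_le (disk rho `&` bset (dT s rho k j)) d.
Proof.
move=> s0 sa r0 kK jN d0 hd.
have [hK hs h2 ha] := h_facts s0 sa.
have [N1 NV v1 v2] := N_facts s0 sa r0 kK.
have FN := FNv s0 sa r0 kK.
apply: (@diam_box _ _ (lo s rho k) (lo s rho k + hh s rho)
  (aa rho + j%:R * vv s rho k) (aa rho + j%:R * vv s rho k + vv s rho k + hh s rho)) => //.
  move=> p [pd [/andP[px1 px2] /andP[py1 py2]]]; rewrite /= in px1 px2 py1 py2.
  split; first by rewrite px1 px2.
  rewrite py1 /=.
  move: py2; case: eqP => [e _|_ h].
    have yb := ybound p s0 sa r0 kK pd (introT andP (conj px1 px2)).
    rewrite FN -e -natr1 mulrDl mul1r in yb; have := ler_norm p.2; lra.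
  by move: h; rewrite -natr1 mulrDl mul1r; lra.
apply: le_trans hd; apply: sq_bound2; lra.
Qed.

Lemma diam_B {R : realType} [s rho : R] [k j : nat] (d : R) :
  0 < s -> s <= aa rho -> 0 <= rho -> (k < KK s rho)%N -> (j < NN s rho k)%N ->
  0 <= d -> 40 * s ^+ 2 <= d ^+ 2 ->
  diam_le (disk rho `&` bset (dB s rho k j)) d.
Proof.
move=> s0 sa r0 kK jN d0 hd.
have [hK hs h2 ha] := h_facts s0 sa.
have [N1 NV v1 v2] := N_facts s0 sa r0 kK.
have FN := FNv s0 sa r0 kK.
apply: (@diam_box _ _ (lo s rho k) (lo s rho k + hh s rho)
  (- aa rho - j%:R * vv s rho k - vv s rho k - hh s rho) (- aa rho - j%:R * vv s rho k)) => //.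
  move=> p [pd [/andP[px1 px2] /andP[py1 py2]]]; rewrite /= in px1 px2 py1 py2.
  split; first by rewrite px1 px2.
  rewrite py2 andbT.
  move: py1; case: eqP => [e _|_ h].
    have yb := ybound p s0 sa r0 kK pd (introT andP (conj px1 px2)).
    rewrite FN -e -natr1 mulrDl mul1r in yb; have := ler_norm (- p.2); rewrite normrN; lra.
  by move: h; rewrite -natr1 mulrDl mul1r; lra.
apply: le_trans hd; apply: sq_bound2; lra.
Qed.

Lemma abs_sq_le {R : realType} (x b : R) : `|x| <= b -> x ^+ 2 <= b ^+ 2.
Proof.
move=> h; have b0 : 0 <= b by apply: le_trans h.
have e : x ^+ 2 = `|x| ^+ 2 by rewrite -normrX ger0_norm // sqr_ge0.
by rewrite e ler_pXn2r // ?nnegrE.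
Qed.

Lemma measurable_cell {R : realType} (rho : R) d : 0 <= rho -> measurable (disk rho `&` bset d).
Proof. move=> r0; apply: measurableI; [exact: measurable_disk | exact: measurable_box]. Qed.

Lemma area_ge {R : realType} (C : set (R * R)) x0 x1 y0 y1 (A : R) :
  measurable C -> box x0 x1 y0 y1 `<=` C -> x0 < x1 -> y0 < y1 ->
  A <= (x1 - x0) * (y1 - y0) -> ((A%:E <= area C))%E.
Proof.
move=> mC sub h1 h2 hA; have := @area_box _ C x0 x1 y0 y1 mC sub h1 h2; apply: le_trans; by rewrite lee_fin.
Qed.

Lemma prod_lb {R : realType} (x y a b : R) : 0 <= a -> 0 <= b -> a <= x -> b <= y -> a * b <= x * y.
Proof. by move=> a0 b0 ax yb; apply: ler_pM. Qed.

Lemma area_M {R : realType} [s rho : R] [k j : nat] :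
  0 < s -> s <= aa rho -> 0 <= rho -> (k < KK s rho)%N -> (j < MM s rho k)%N ->
  ((3 * s ^+ 2 / 32)%:E <= area (disk rho `&` bset (dM s rho k j)))%E.
Proof.
move=> s0 sa r0 kK jM.
have [hK hs h2 ha] := h_facts s0 sa.
have [M1 MW w1 w2] := M_facts s0 sa r0 kK.
have [X0 XM XS] := X_facts s0 sa r0 kK.
have [G2 aG Gr] := G_facts s0 sa r0 kK.
have [y0 ya yabs _] := yo_facts s0 sa kK.
have Xl : - GG s rho k <= XX s rho k j by rewrite -X0; apply: X_mono.
have Xu : XX s rho k j + wd s rho k <= GG s rho k.
  by rewrite -XS -XM; apply: X_mono.
apply: (@area_ge _ _ (XX s rho k j) (XX s rho k j + wd s rho k) (lo s rho k) (lo s rho k + hh s rho)).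
- exact: measurable_cell.
- move=> q [/andP[q1 q2] /andP[q3 q4]]; split.
    apply/(diskE _ _ r0).
    have e1 : q.1 ^+ 2 <= GG s rho k ^+ 2 by apply: abs_sq_le; apply: norm_le; lra.
    have e2 : q.2 ^+ 2 <= yo s rho k ^+ 2 by apply: abs_sq_le; apply: yabs; rewrite q3 q4.
    lra.
  rewrite /bset /dM /box /= q3 q4; split => //; apply/andP; split.
    by case: eqP => _; lra.
  by case: eqP => _; [lra | rewrite XS].
- lra.
- lra.
- have -> : XX s rho k j + wd s rho k - XX s rho k j = wd s rho k by ring.
  have -> : lo s rho k + hh s rho - lo s rho k = hh s rho by ring.
  have hp : s * s <= wd s rho k * hh s rho by apply: ler_pM; lra.
  have := sqr_ge0 s; rewrite expr2 in hp *; lra.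
Qed.


Lemma cap_area_common {R : realType} [s rho : R] [k j : nat] (x y : R) :
  0 < s -> s <= aa rho -> 0 <= rho -> (k < KK s rho)%N -> (j < NN s rho k)%N ->
  cc s rho k - hh s rho / 4 <= x <= cc s rho k + hh s rho / 4 ->
  aa rho + j%:R * vv s rho k <= y <= aa rho + j%:R * vv s rho k + vv s rho k ->
  [/\ x ^+ 2 + y ^+ 2 <= rho ^+ 2, lo s rho k <= x <= lo s rho k + hh s rho
    & y <= FF s rho k].
Proof.
move=> s0 sa r0 kK jN /andP[x1 x2] /andP[y1 y2].
have [hK hs h2 ha] := h_facts s0 sa.
have [N1 NV v1 v2] := N_facts s0 sa r0 kK.
have FN := FNv s0 sa r0 kK.
have [m0 m1 F2 F1 Fr] := cap_facts s0 sa r0 kK.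
have a0 := aa_ge0 rho.
have yF : y <= FF s rho k.
  have : j.+1%:R * vv s rho k <= (NN s rho k)%:R * vv s rho k by rewrite ler_wpM2r ?ler_nat //; lra.
  rewrite FN -natr1 mulrDl mul1r; lra.
have jv : 0 <= j%:R * vv s rho k by apply: mulr_ge0 => //; lra.
split => //.
- have e1 : x ^+ 2 <= mm s rho k ^+ 2.
    apply: abs_sq_le; rewrite /mm.
    have := ler_normD (cc s rho k) (x - cc s rho k).
    rewrite (_ : cc s rho k + (x - cc s rho k) = x); last by ring.
    have : `|x - cc s rho k| <= hh s rho / 4 by apply: norm_le; lra.
    lra.
  have e2 : y ^+ 2 <= FF s rho k ^+ 2 by apply: abs_sq_le; apply: norm_le; lra.
  lra.
- rewrite /cc in x1 x2; apply/andP; split; lra.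
Qed.

Lemma area_T {R : realType} [s rho : R] [k j : nat] :
  0 < s -> s <= aa rho -> 0 <= rho -> (k < KK s rho)%N -> (j < NN s rho k)%N ->
  ((3 * s ^+ 2 / 32)%:E <= area (disk rho `&` bset (dT s rho k j)))%E.
Proof.
move=> s0 sa r0 kK jN.
have [hK hs h2 ha] := h_facts s0 sa.
have [N1 NV v1 v2] := N_facts s0 sa r0 kK.
have [m0 m1 F2 F1 Fr] := cap_facts s0 sa r0 kK.
apply: (@area_ge _ _ (cc s rho k - hh s rho / 4) (cc s rho k + hh s rho / 4)
  (aa rho + j%:R * vv s rho k) (aa rho + j%:R * vv s rho k + vv s rho k)).
- exact: measurable_cell.
- move=> q [hx hy].
  have [D X Y] := cap_area_common _ _ s0 sa r0 kK jN hx hy.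
  case/andP: hy => y1 y2.
  split; first by apply/(diskE _ _ r0).
  rewrite /bset /dT /box /= X y1; split => //.
  by case: eqP => _; [lra | rewrite -natr1 mulrDl mul1r; lra].
- lra.
- lra.
- have -> : cc s rho k + hh s rho / 4 - (cc s rho k - hh s rho / 4) = hh s rho / 2 by field.
  have -> : aa rho + j%:R * vv s rho k + vv s rho k - (aa rho + j%:R * vv s rho k) = vv s rho k by ring.
  have hp : s / 2 * (3 * s / 16) <= hh s rho / 2 * vv s rho k by apply: ler_pM; lra.
  have -> : 3 * s ^+ 2 / 32 = s / 2 * (3 * s / 16) by field.
  exact: hp.
Qed.

Lemma area_B {R : realType} [s rho : R] [k j : nat] :
  0 < s -> s <= aa rho -> 0 <= rho -> (k < KK s rho)%N -> (j < NN s rho k)%N ->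
  ((3 * s ^+ 2 / 32)%:E <= area (disk rho `&` bset (dB s rho k j)))%E.
Proof.
move=> s0 sa r0 kK jN.
have [hK hs h2 ha] := h_facts s0 sa.
have [N1 NV v1 v2] := N_facts s0 sa r0 kK.
have [m0 m1 F2 F1 Fr] := cap_facts s0 sa r0 kK.
apply: (@area_ge _ _ (cc s rho k - hh s rho / 4) (cc s rho k + hh s rho / 4)
  (- aa rho - j%:R * vv s rho k - vv s rho k) (- aa rho - j%:R * vv s rho k)).
- exact: measurable_cell.
- move=> q [hx hy].
  have hy' : aa rho + j%:R * vv s rho k <= - q.2 <= aa rho + j%:R * vv s rho k + vv s rho k.
    by case/andP: hy => y1 y2; apply/andP; split; lra.
  have [D X Y] := cap_area_common _ _ s0 sa r0 kK jN hx hy'.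
  case/andP: hy => y1 y2.
  split; first by apply/(diskE _ _ r0); rewrite sqrrN in D.
  rewrite /bset /dB /box /= X y2 andbT; split => //.
  by case: eqP => _; [lra | rewrite -natr1 mulrDl mul1r; lra].
- lra.
- lra.
- have -> : cc s rho k + hh s rho / 4 - (cc s rho k - hh s rho / 4) = hh s rho / 2 by field.
  have -> : - aa rho - j%:R * vv s rho k - (- aa rho - j%:R * vv s rho k - vv s rho k) = vv s rho k by ring.
  have hp : s / 2 * (3 * s / 16) <= hh s rho / 2 * vv s rho k by apply: ler_pM; lra.
  have -> : 3 * s ^+ 2 / 32 = s / 2 * (3 * s / 16) by field.
  exact: hp.
Qed.


Definition sep {R : realType} (d d' : (R * R) * (R * R)) : Prop :=
  d.1.2 <= d'.1.1 \/ d'.1.2 <= d.1.1 \/ d.2.2 <= d'.2.1 \/ d'.2.2 <= d.2.1.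

Lemma sep_sym {R : realType} (d d' : (R * R) * (R * R)) : sep d d' -> sep d' d.
Proof. by rewrite /sep; tauto. Qed.

Lemma interior_disj {R : realType} (rho : R) (d d' : (R * R) * (R * R)) : sep d d' ->
  interior2 (disk rho `&` bset d) `&` interior2 (disk rho `&` bset d') = set0.
Proof.
move=> hs; apply/seteqP; split => // p [h1 h2].
have [/andP[a1 a2] /andP[a3 a4]] := @interior_box _ _ d.1.1 d.1.2 d.2.1 d.2.2 p (fun q (hq : (disk rho `&` bset d) q) => hq.2) h1.
have [/andP[b1 b2] /andP[b3 b4]] := @interior_box _ _ d'.1.1 d'.1.2 d'.2.1 d'.2.2 p (fun q (hq : (disk rho `&` bset d') q) => hq.2) h2.
exfalso; case: hs => [|[|[|]]] h; lra.
Qed.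

Lemma lo_step {R : realType} [s rho : R] [k k' : nat] : 0 < s -> s <= aa rho ->
  (k < k')%N -> lo s rho k + hh s rho <= lo s rho k'.
Proof.
move=> s0 sa kk.
have [hK hs h2 ha] := h_facts s0 sa.
rewrite /lo.
have : k.+1%:R * hh s rho <= k'%:R * hh s rho by rewrite ler_wpM2r ?ler_nat //; lra.
rewrite -natr1 mulrDl mul1r; lra.
Qed.

Lemma sepM_row {R : realType} [s rho : R] [k k' j j' : nat] : 0 < s -> s <= aa rho ->
  (k < k')%N -> sep (dM s rho k j) (dM s rho k' j').
Proof. move=> s0 sa kk; right; right; left => /=; exact: lo_step. Qed.

Lemma sepM_col {R : realType} [s rho : R] [k j j' : nat] : 0 < s -> s <= aa rho -> 0 <= rho ->
  (k < KK s rho)%N -> (j < j')%N -> (j' < MM s rho k)%N -> sep (dM s rho k j) (dM s rho k j').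
Proof.
move=> s0 sa r0 kK jj jM; left => /=.
have -> : (j.+1 == MM s rho k) = false.
  by apply/negbTE; rewrite neq_ltn; apply/orP; left; apply: leq_ltn_trans jj jM.
have -> : (j' == 0%N) = false by apply/negbTE; rewrite -lt0n; apply: leq_ltn_trans _ jj.
exact: X_mono.
Qed.

Lemma sepT_col {R : realType} [s rho : R] [k k' j j' : nat] : 0 < s -> s <= aa rho ->
  (k < k')%N -> sep (dT s rho k j) (dT s rho k' j').
Proof. move=> s0 sa kk; left => /=; exact: lo_step. Qed.

Lemma sepB_col {R : realType} [s rho : R] [k k' j j' : nat] : 0 < s -> s <= aa rho ->
  (k < k')%N -> sep (dB s rho k j) (dB s rho k' j').
Proof. move=> s0 sa kk; left => /=; exact: lo_step. Qed.

Lemma sepT_row {R : realType} [s rho : R] [k j j' : nat] : 0 < s -> s <= aa rho -> 0 <= rho ->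
  (k < KK s rho)%N -> (j < j')%N -> (j' < NN s rho k)%N -> sep (dT s rho k j) (dT s rho k j').
Proof.
move=> s0 sa r0 kK jj jN; right; right; left => /=.
have -> : (j.+1 == NN s rho k) = false.
  by apply/negbTE; rewrite neq_ltn; apply/orP; left; apply: leq_ltn_trans jj jN.
have [_ _ v1 _] := N_facts s0 sa r0 kK.
rewrite lerD2l ler_wpM2r ?ler_nat //; lra.
Qed.

Lemma sepB_row {R : realType} [s rho : R] [k j j' : nat] : 0 < s -> s <= aa rho -> 0 <= rho ->
  (k < KK s rho)%N -> (j < j')%N -> (j' < NN s rho k)%N -> sep (dB s rho k j) (dB s rho k j').
Proof.
move=> s0 sa r0 kK jj jN; right; right; right => /=.
have -> : (j.+1 == NN s rho k) = false.
  by apply/negbTE; rewrite neq_ltn; apply/orP; left; apply: leq_ltn_trans jj jN.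
have [_ _ v1 _] := N_facts s0 sa r0 kK.
have : j.+1%:R * vv s rho k <= j'%:R * vv s rho k by rewrite ler_wpM2r ?ler_nat //; lra.
lra.
Qed.

Lemma sepMT {R : realType} [s rho : R] [k k' j j' : nat] : 0 < s -> s <= aa rho -> 0 <= rho ->
  (k < KK s rho)%N -> (k' < KK s rho)%N -> sep (dM s rho k j) (dT s rho k' j').
Proof.
move=> s0 sa r0 kK kK'; right; right; left => /=.
have [_ l2] := lo_bounds s0 sa kK.
have [_ _ v1 _] := N_facts s0 sa r0 kK'.
have : 0 <= j'%:R * vv s rho k' by apply: mulr_ge0 => //; lra.
lra.
Qed.

Lemma sepMB {R : realType} [s rho : R] [k k' j j' : nat] : 0 < s -> s <= aa rho -> 0 <= rho ->
  (k < KK s rho)%N -> (k' < KK s rho)%N -> sep (dM s rho k j) (dB s rho k' j').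
Proof.
move=> s0 sa r0 kK kK'; right; right; right => /=.
have [l1 _] := lo_bounds s0 sa kK.
have [_ _ v1 _] := N_facts s0 sa r0 kK'.
have : 0 <= j'%:R * vv s rho k' by apply: mulr_ge0 => //; lra.
lra.
Qed.

Lemma sepTB {R : realType} [s rho : R] [k k' j j' : nat] : 0 < s -> s <= aa rho -> 0 <= rho ->
  (k < KK s rho)%N -> (k' < KK s rho)%N -> sep (dT s rho k j) (dB s rho k' j').
Proof.
move=> s0 sa r0 kK kK'; right; right; right => /=.
have [_ _ v1 _] := N_facts s0 sa r0 kK.
have [_ _ v1' _] := N_facts s0 sa r0 kK'.
have : 0 <= j%:R * vv s rho k by apply: mulr_ge0 => //; lra.
have : 0 <= j'%:R * vv s rho k' by apply: mulr_ge0 => //; lra.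
have := aa_ge0 rho.
lra.
Qed.


Lemma sep_lt {R : realType} [s rho : R] [c k j c' k' j' : nat] :
  0 < s -> s <= aa rho -> 0 <= rho -> (c < 3)%N -> (c' < 3)%N ->
  (k < KK s rho)%N -> (k' < KK s rho)%N -> validb s rho c k j -> validb s rho c' k' j' ->
  (c < c')%N \/ (c = c' /\ ((k < k')%N \/ (k = k' /\ (j < j')%N))) ->
  sep (dataOf s rho c k j) (dataOf s rho c' k' j').
Proof.
move=> s0 sa r0 c3 c3' kK kK' v v' [cc'|[ec [kk|[ek jj]]]].
- move: c3 c3' cc' v v'; rewrite /dataOf /validb.
  case: c => [|[|[|c]]] //; case: c' => [|[|[|c']]] // _ _ _ _ _.
  + exact: sepMT.
  + exact: sepMB.
  + exact: sepTB.
- subst c'; clear c3'; move: c3 v v'; rewrite /dataOf /validb.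
  case: c => [|[|[|c]]] // _ _ _.
  + exact: sepM_row.
  + exact: sepT_col.
  + exact: sepB_col.
- subst c' k'; clear c3' kK'; move: c3 v v'; rewrite /dataOf /validb.
  case: c => [|[|[|c]]] // _ _ v'.
  + exact: sepM_col.
  + exact: sepT_row.
  + exact: sepB_row.
Qed.

Lemma sep_neq {R : realType} [s rho : R] [c k j c' k' j' : nat] :
  0 < s -> s <= aa rho -> 0 <= rho -> (c < 3)%N -> (c' < 3)%N ->
  (k < KK s rho)%N -> (k' < KK s rho)%N -> validb s rho c k j -> validb s rho c' k' j' ->
  (c, k, j) != (c', k', j') ->
  sep (dataOf s rho c k j) (dataOf s rho c' k' j').
Proof.
move=> s0 sa r0 c3 c3' kK kK' v v' ne.
have [cc'|c'c|ec] := ltngtP c c'.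
- by apply: sep_lt => //; left.
- by apply: sep_sym; apply: sep_lt => //; left.
subst c'.
have [kk|k'k|ek] := ltngtP k k'.
- by apply: sep_lt => //; right; split => //; left.
- by apply: sep_sym; apply: sep_lt => //; right; split => //; left.
subst k'.
have [jj|j'j|ej] := ltngtP j j'.
- by apply: sep_lt => //; right; split => //; right.
- by apply: sep_sym; apply: sep_lt => //; right; split => //; right.
by subst j'; rewrite eqxx in ne.
Qed.

Lemma grid {R : realType} (b d y : R) (n : nat) : 0 < d -> (0 < n)%N -> b <= y ->
  exists j, [/\ (j < n)%N, b + j%:R * d <= y & (j.+1 = n \/ y <= b + j.+1%:R * d)].
Proof.
move=> d0 n0 hby.
have t0 : 0 <= (y - b) / d by rewrite divr_ge0 //; lra.
have /andP[t1 t2] := truncP t0.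
rewrite ler_pdivlMr // in t1; rewrite ltr_pdivrMr // in t2.
case: (ltnP (Num.trunc ((y - b) / d)) n) => hT.
  exists (Num.trunc ((y - b) / d)); split => //; first lra.
  by right; lra.
exists n.-1; split; first by rewrite prednK.
  have : n.-1%:R * d <= (Num.trunc ((y - b) / d))%:R * d.
    by rewrite ler_wpM2r ?ler_nat; [| lra | apply: leq_trans hT; apply: leq_pred].
  lra.
by left; rewrite prednK.
Qed.


Lemma col_index {R : realType} [s rho : R] (x : R) : 0 < s -> s <= aa rho ->
  - aa rho <= x <= aa rho ->
  exists k, (k < KK s rho)%N /\ lo s rho k <= x <= lo s rho k + hh s rho.
Proof.
move=> s0 sa /andP[x1 x2].
have [hK hs h2 ha] := h_facts s0 sa.
have K2 := K_ge2 s0 sa.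
have K0 : (0 < KK s rho)%N by apply: leq_trans K2.
have h0 : 0 < hh s rho by lra.
have [k [kK k1 k2]] := @grid _ (- aa rho) (hh s rho) x (KK s rho) h0 K0 x1.
exists k; split => //; apply/andP; split; first by [].
case: k2 => [e|k2]; last by move: k2; rewrite -natr1 mulrDl mul1r /lo; lra.
rewrite /lo; have : k.+1%:R * hh s rho = 2 * aa rho by rewrite e.
rewrite -natr1 mulrDl mul1r; lra.
Qed.

Lemma disk_abs {R : realType} (rho : R) p : 0 <= rho -> disk rho p ->
  `|p.1| <= rho /\ `|p.2| <= rho.
Proof.
move=> r0 /(diskE _ _ r0) h.
have := sqr_ge0 p.1; have := sqr_ge0 p.2 => h1 h2.
split; apply: sq_le => //; rewrite -normrX ger0_norm ?sqr_ge0 //; lra.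
Qed.

Lemma cover_disk {R : realType} [s rho : R] (p : R * R) : 0 < s -> s <= aa rho -> 0 <= rho ->
  disk rho p -> exists c k j, [/\ (c < 3)%N, (k < KK s rho)%N, validb s rho c k j
    & bset (dataOf s rho c k j) p].
Proof.
move=> s0 sa r0 pd.
have [hK hs h2 ha] := h_facts s0 sa.
have [ax ay] := disk_abs _ _ r0 pd.
move: (ax) (ay); rewrite !ler_norml => /andP[ax1 ax2] /andP[ay1 ay2].
have a0 := aa_ge0 rho.
have a2 := aa_sq rho.
have hp := (iffLR (diskE _ _ r0) pd).
case: (lerP `|p.2| (aa rho)) => hy.
-
  move: (hy); rewrite ler_norml => /andP[y1 y2].
  have [k [kK /andP[k1 k2]]] := @col_index _ s rho p.2 s0 sa (introT andP (conj y1 y2)).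
  have [M1 MW w1 w2] := M_facts s0 sa r0 kK.
  have [X0 XM XS] := X_facts s0 sa r0 kK.
  have [G2 aG Gr] := G_facts s0 sa r0 kK.
  have [j [jM j1 j2]] : exists j, [/\ (j < MM s rho k)%N,
      (j == 0%N) || (XX s rho k j <= p.1)
    & (j.+1 == MM s rho k) || (p.1 <= XX s rho k j.+1)].
    case: (ltrP p.1 (- GG s rho k)) => hx.
      exists 0%N; split => //; apply/orP; right.
      have : XX s rho k 0 <= XX s rho k 1 by apply: X_mono.
      rewrite X0; lra.
    have [j [jM j1 j2]] := @grid _ (- GG s rho k) (wd s rho k) p.1 (MM s rho k) ltac:(lra) M1 hx.
    exists j; split => //; first by apply/orP; right.
    by case: j2 => [->|h]; apply/orP; [left | right].
  exists 0%N, k, j; split => //.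
  rewrite /bset /dataOf /dM /box /= k1 k2; split => //; apply/andP; split.
    case: eqP => [_|ne]; first lra.
    by move: j1; case: eqP.
  case: eqP => [_|ne]; first lra.
  by move: j2; case: eqP.
-
  have hx : `|p.1| <= aa rho.
    apply: sq_le => //; rewrite -normrX ger0_norm ?sqr_ge0 //.
    have : aa rho ^+ 2 <= `|p.2| ^+ 2 by rewrite ler_pXn2r // ?nnegrE //; lra.
    rewrite -normrX ger0_norm ?sqr_ge0 //; lra.
  move: hx; rewrite ler_norml => hx.
  have [k [kK /andP[k1 k2]]] := @col_index _ s rho p.1 s0 sa hx.
  have [N1 NV v1 v2] := N_facts s0 sa r0 kK.
  case: (lerP 0 p.2) => y0.
  + rewrite ger0_norm // in hy.
    have [j [jN j1 j2]] := @grid _ (aa rho) (vv s rho k) p.2 (NN s rho k) ltac:(lra) N1 (ltW hy).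
    exists 1%N, k, j; split => //.
    rewrite /bset /dataOf /dT /box /= k1 k2 j1; split => //.
    by case: eqP => // ne; case: j2.
  + rewrite ltr0_norm // in hy.
    have [j [jN j1 j2]] := @grid _ (aa rho) (vv s rho k) (- p.2) (NN s rho k) ltac:(lra) N1 (ltW hy).
    exists 2%N, k, j; split => //.
    rewrite /bset /dataOf /dB /box /= k1 k2; split => //; apply/andP; split; last by lra.
    by case: eqP => // ne; case: j2 => // h; lra.
Qed.


Definition LL {R : realType} (s rho : R) : nat :=
  \max_(k < KK s rho) (MM s rho k + NN s rho k).

Lemma cell_diam {R : realType} [s rho : R] [c k j : nat] (d : R) :
  0 < s -> s <= aa rho -> 0 <= rho -> (c < 3)%N -> (k < KK s rho)%N -> validb s rho c k j ->
  0 <= d -> 40 * s ^+ 2 <= d ^+ 2 ->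
  diam_le (disk rho `&` bset (dataOf s rho c k j)) d.
Proof.
move=> s0 sa r0 c3 kK; rewrite /validb /dataOf.
case: c c3 => [|[|[|c]]] // _ v.
- exact: diam_M.
- exact: diam_T.
- exact: diam_B.
Qed.

Lemma cell_area {R : realType} [s rho : R] [c k j : nat] :
  0 < s -> s <= aa rho -> 0 <= rho -> (c < 3)%N -> (k < KK s rho)%N -> validb s rho c k j ->
  ((3 * s ^+ 2 / 32)%:E <= area (disk rho `&` bset (dataOf s rho c k j)))%E.
Proof.
move=> s0 sa r0 c3 kK; rewrite /validb /dataOf.
case: c c3 => [|[|[|c]]] // _ v.
- exact: area_M.
- exact: area_T.
- exact: area_B.
Qed.

Theorem lemmaC1 (R : realType) (w rho : R) (hw : 0 < w) (hrho : 2 * w <= rho) :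
  exists (n : nat) (C : 'I_n -> set (R * R)),
    [/\ \bigcup_(i in [set: 'I_n]) C i = disk rho,
        (forall i j, i != j -> interior2 (C i) `&` interior2 (C j) = set0) &
        forall i, [/\ convex2 (C i), measurable (C i),
                      diam_le (C i) (8 * w) &
                      ((w ^+ 2 / 8)%:E <= area (C i))%E]].
Proof.
pose s := 5 * w / 4.
have s0 : 0 < s by rewrite /s; lra.
have r0 : 0 <= rho by lra.
have sa : s <= aa rho.
  apply: sq_le; first exact: aa_ge0.
  rewrite aa_sq.
  have h1 : (2 * w) ^+ 2 <= rho ^+ 2 by rewrite ler_pXn2r // ?nnegrE; lra.
  have e1 : s ^+ 2 = 25 / 16 * w ^+ 2 by rewrite /s; field.
  have e2 : (2 * w) ^+ 2 = 4 * w ^+ 2 by ring.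
  have := sqr_ge0 w; lra.
have dd : 40 * s ^+ 2 <= (8 * w) ^+ 2.
  have e1 : 40 * s ^+ 2 = 125 / 2 * w ^+ 2 by rewrite /s; field.
  have e2 : (8 * w) ^+ 2 = 64 * w ^+ 2 by ring.
  have := sqr_ge0 w; lra.
have d0 : 0 <= 8 * w by lra.
have aw : w ^+ 2 / 8 <= 3 * s ^+ 2 / 32.
  have e1 : 3 * s ^+ 2 / 32 = 75 / 512 * w ^+ 2 by rewrite /s; field.
  have := sqr_ge0 w; lra.
pose T := {p : 'I_3 * 'I_(KK s rho) * 'I_(LL s rho) | validb s rho p.1.1 p.1.2 p.2}.
pose cellT (t : T) := disk rho `&` bset (dataOf s rho (val t).1.1 (val t).1.2 (val t).2).
exists #|{: T}|, (fun i => cellT (enum_val i)).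
split.
- apply/seteqP; split; first by move=> p [i _ [hp _]].
  move=> p hp.
  have [c [k [j [c3 kK v hb]]]] := cover_disk p s0 sa r0 hp.
  have jL : (j < LL s rho)%N.
    have := @leq_bigmax _ (fun k : 'I_(KK s rho) => (MM s rho k + NN s rho k)%N) (Ordinal kK).
    rewrite /LL /=; apply: leq_trans.
    move: v; rewrite /validb; case: ifP => _ h.
      by apply: leq_trans h _; apply: leq_addr.
    by apply: leq_trans h _; apply: leq_addl.
  pose t : T := exist _ (Ordinal c3, Ordinal kK, Ordinal jL) v.
  exists (enum_rank t) => //.
  by rewrite /cellT enum_rankK /=; split.
- move=> i j ne.
  have ne' : enum_val i != enum_val j.
    by apply: contra ne => /eqP /enum_val_inj ->.
  rewrite /cellT; apply: interior_disj.
  move: ne'; case: (enum_val i) => [[[c k] l] v]; case: (enum_val j) => [[[c' k'] l'] v'] ne' /=.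
  by apply: sep_neq.
- move=> i; rewrite /cellT.
  case: (enum_val i) => [[[c k] l] v] /=.
  split.
  + apply: convex2I; [exact: convex2_disk | exact: convex2_box].
  + exact: measurable_cell.
  + by apply: cell_diam.
  + apply: le_trans (cell_area s0 sa r0 (ltn_ord c) (ltn_ord k) v).
    by rewrite lee_fin.
Qed.
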